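(* Let $A$ be a non-zero linear endomorphism of $\mathbb{E}^n$ and $\mathbf{b}$ an orthonormal basis. (a) If $n$ is odd, the forms $\mathbf{A}^r_{kl}$ ($1\le k<l\le n$) have at least one common non-zero zero. (b) The non-zero linear subspaces $W\subseteq\mathbb{E}^n$ that are maximal (under inclusion) among subspaces on which every $\mathbf{A}^r_{kl}$ vanishes identically are exactly the eigenspaces of $A$ for its real eigenvalues; in particular the dimension of such a maximal common zero-valued subspace equals the geometric multiplicity of the corresponding eigenvalue of $A$.
   Context: $\mathbb{E}^n$ is $\mathbb{R}^n$ with the standard inner product. For an orthonormal basis $\mathbf{b}=\{b_1,\dots,b_n\}$ and $1\le k<l\le n$, $R_{kl}$ is the linear map with $R_{kl}(b_k)=b_l$, $R_{kl}(b_l)=-b_k$, $R_{kl}(b_m)=0$ for $m\ne k,l$. The rotation forms of $A$ are $\mathbf{A}^r_{kl}(u):=A(u)\cdot R_{kl}(u)$. *)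

(* Defs.v *)
(* E^n = row vectors 'rV[R]_n over R : realType, with the
   standard inner product.  A linear endomorphism is a matrix A acting on row
   vectors by u |-> u *m A.  An (orthonormal) basis b is the square matrix B
   whose k-th row is b_k. *)
From HB Require Import structures.
From mathcomp Require Import all_boot all_order all_algebra.
From mathcomp Require Import reals.
Set Implicit Arguments. Unset Strict Implicit. Unset Printing Implicit Defensive.
Import Order.TTheory GRing.Theory Num.Theory.
Local Open Scope ring_scope.

Definition dotp (R : realType) (n : nat) (u v : 'rV[R]_n) : R :=
  \sum_(i < n) u 0 i * v 0 i.

Definition orthonormal_basis (R : realType) (n : nat) (B : 'M[R]_n) : Prop :=
  forall i j : 'I_n, dotp (row i B) (row j B) = (i == j)%:R.

Definition coords (R : realType) (n : nat) (B : 'M[R]_n) (u : 'rV[R]_n) : 'rV[R]_n :=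
  u *m invmx B.

(* R_kl: the linear map with R_kl(b_k) = b_l, R_kl(b_l) = - b_k, R_kl(b_m) = 0 *)
Definition rotR (R : realType) (n : nat) (B : 'M[R]_n) (k l : 'I_n)
  (u : 'rV[R]_n) : 'rV[R]_n :=
  coords B u 0 k *: row l B - coords B u 0 l *: row k B.

Definition rotform (R : realType) (n : nat) (A B : 'M[R]_n) (k l : 'I_n)
  (u : 'rV[R]_n) : R :=
  dotp (u *m A) (rotR B k l u).

Definition common_zero_subspace (R : realType) (n : nat) (A B W : 'M[R]_n) : Prop :=
  forall u : 'rV[R]_n, (u <= W)%MS ->
    forall k l : 'I_n, (k < l)%N -> rotform A B k l u = 0.

Definition maximal_common_zero_subspace (R : realType) (n : nat) (A B W : 'M[R]_n) : Prop :=
  W != 0 /\ common_zero_subspace A B W /\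
  forall W' : 'M[R]_n, common_zero_subspace A B W' -> (W <= W')%MS -> (W' <= W)%MS.

(* Main.v *)
Require Import Defs.
From HB Require Import structures.
From mathcomp Require Import all_boot all_order all_algebra.
From mathcomp Require Import reals.
From mathcomp.real_closed Require Import polyrcf.
From mathcomp Require Import ring.
Import Order.TTheory GRing.Theory Num.Theory.
Local Open Scope ring_scope.

Section Aux.
Variables (R : realType) (n : nat).

Lemma dotp_row (v : 'rV[R]_n) (B : 'M[R]_n) l :
  dotp v (row l B) = (v *m B^T) 0 l.
Proof. by rewrite /dotp !mxE; apply: eq_bigr => i _; rewrite !mxE. Qed.

Lemma dotpBZ (v x y : 'rV[R]_n) (a b : R) :
  dotp v (a *: x - b *: y) = a * dotp v x - b * dotp v y.
Proof.
rewrite /dotp !mulr_sumr -sumrB; apply: eq_bigr => i _; rewrite !mxE.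
by rewrite mulrBr !mulrA [v 0 i * a]mulrC [v 0 i * b]mulrC.
Qed.

Lemma ortho_mul {B : 'M[R]_n} : orthonormal_basis B -> B *m B^T = 1%:M.
Proof.
move=> H; apply/matrixP => i j; have := H i j; rewrite /dotp !mxE => <-.
by apply: eq_bigr => k _; rewrite !mxE.
Qed.

Lemma ortho_inv {B : 'M[R]_n} : orthonormal_basis B ->
  B \in unitmx /\ invmx B = B^T.
Proof.
move=> H; have HB := ortho_mul H.
have [uB _] := mulmx1_unit HB; split=> //.
by rewrite -[invmx B]mulmx1 -HB mulmxA mulVmx // mul1mx.
Qed.

Lemma rotform_eq (A B : 'M[R]_n) k l u : orthonormal_basis B ->
  rotform A B k l u =
  coords B u 0 k * coords B (u *m A) 0 l - coords B u 0 l * coords B (u *m A) 0 k.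
Proof.
move=> H; have [_ iB] := ortho_inv H.
rewrite /rotform /rotR dotpBZ !dotp_row /coords iB.
by rewrite [_ * (_ *m B^T) 0 l]mulrC.
Qed.

Lemma eigen_iff (A B : 'M[R]_n) u : orthonormal_basis B ->
  (forall k l : 'I_n, (k < l)%N -> rotform A B k l u = 0) <->
  exists a, u *m A = a *: u.
Proof.
move=> H; have [uB iB] := ortho_inv H.
have uP : invmx B \in unitmx by rewrite unitmx_inv.
split; last first.
  move=> [a Ha] k l _; rewrite rotform_eq // Ha /coords -scalemxAl !mxE.
  ring.
move=> Hf.
set P := invmx B in uP *.
have Hf' : forall k l, coords B u 0 k * coords B (u *m A) 0 l =
                       coords B u 0 l * coords B (u *m A) 0 k.
  move=> k l; case: (ltngtP k l) => [kl|lk|kl].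
  - have := Hf k l kl; rewrite rotform_eq // => /eqP; rewrite subr_eq0 => /eqP //.
  - have := Hf l k lk; rewrite rotform_eq // => /eqP; rewrite subr_eq0 => /eqP //.
  - by rewrite (ord_inj kl).
case: (pickP (fun k => coords B u 0 k != 0)) => [k Hk|H0]; last first.
  exists 0; rewrite scale0r.
  have -> : u = 0.
    have : coords B u = 0.
      by apply/matrixP => i j; rewrite (ord1 i) [RHS]mxE; move: (H0 j) => /= /negbFE/eqP.
    by rewrite /coords => /(f_equal (mulmx^~ (invmx P))); rewrite mulmxK // mul0mx.
  by rewrite mul0mx.
exists (coords B (u *m A) 0 k / coords B u 0 k).
have : coords B (u *m A) = (coords B (u *m A) 0 k / coords B u 0 k) *: coords B u.
  apply/matrixP => i j; rewrite (ord1 i) [RHS]mxE.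
  have := Hf' k j.
  move=> E; apply: (mulfI Hk); rewrite E; field; exact: Hk.
rewrite /coords scalemxAl => /(f_equal (mulmx^~ (invmx P))).
by rewrite !mulmxK.
Qed.

Lemma cz_iff (A B W : 'M[R]_n) : orthonormal_basis B ->
  common_zero_subspace A B W <->
  (forall u : 'rV[R]_n, (u <= W)%MS -> exists a, u *m A = a *: u).
Proof.
move=> H; split.
  by move=> Hc u uW; apply/(eigen_iff A B u H); exact: Hc.
by move=> Hc u uW; apply/(eigen_iff A B u H); exact: Hc.
Qed.

Lemma two_eigen (A : 'M[R]_n) (u v : 'rV[R]_n) a :
  u != 0 -> u *m A = a *: u ->
  (exists b, v *m A = b *: v) -> (exists c, (u + v) *m A = c *: (u + v)) ->
  v *m A = a *: v.
Proof.
move=> u0 Hu [b Hv] [c Huv].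
have [->|v0] := eqVneq v 0; first by rewrite mul0mx scaler0.
have E : a *: u + b *: v = c *: u + c *: v by rewrite -Hu -Hv -mulmxDl Huv scalerDr.
have [ac|ac] := eqVneq a c.
  by move: E; rewrite ac Hv => /addrI.
have E2 : u = ((c - b) / (a - c)) *: v.
  have acn : a - c != 0 by rewrite subr_eq0.
  apply: (@scalerI _ _ (a - c)) => //.
  rewrite scalerA mulrC mulfVK // !scalerBl; apply/eqP; rewrite subr_eq addrAC eq_sym subr_eq.
  by rewrite E addrC.
set s := (c - b) / (a - c) in E2; clearbody s.
have s0 : s != 0 by apply: contraNneq u0 => s0; rewrite E2 s0 scale0r.
have : (s * b) *: v = (s * a) *: v.
  by rewrite -!scalerA -Hv scalemxAl -E2 Hu E2 !scalerA mulrC.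
move/eqP; rewrite -subr_eq0 -scalerBl scaler_eq0 (negbTE v0) orbF subr_eq0.
by move/eqP/(mulfI s0) => <-.
Qed.

Lemma single_eig (A W : 'M[R]_n) :
  W != 0 -> (forall u : 'rV[R]_n, (u <= W)%MS -> exists a, u *m A = a *: u) ->
  exists a, eigenvalue A a /\ (W <= eigenspace A a)%MS.
Proof.
move=> W0 HW.
have [i ui] : exists i, row i W != 0.
  apply/existsP; apply: contraNT W0 => /existsPn H0.
  by apply/eqP/row_matrixP => i; rewrite row0; apply/eqP; move: (H0 i); rewrite negbK.
have [a Ha] := HW _ (row_sub i W).
exists a; split; first by apply/eigenvalueP; exists (row i W).
apply/row_subP => j; apply/eigenspaceP.
apply: (two_eigen _ _ _ _ ui Ha); apply: HW; first exact: row_sub.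
by rewrite addmx_sub // row_sub.
Qed.

End Aux.

Theorem corollary2p9 (R : realType) (n : nat) (A B : 'M[R]_n) :
  A != 0 -> orthonormal_basis B ->
  (* (a) *)
  (odd n -> exists u : 'rV[R]_n, u != 0 /\
      forall k l : 'I_n, (k < l)%N -> rotform A B k l u = 0) /\
  (* (b) *)
  (forall W : 'M[R]_n,
      maximal_common_zero_subspace A B W <->
      exists a : R, eigenvalue A a /\ (W == eigenspace A a)%MS /\
                    \rank W = \rank (eigenspace A a)).
Proof.
move=> _ HB; split.
  move=> on.
  have [a Ha] : {x | root (char_poly A) x}.
    by apply: odd_poly_root; rewrite size_char_poly /= negbK.
  rewrite -eigenvalue_root_char in Ha.
  have [v Hv v0] := eigenvalueP Ha.
  exists v; split => //; apply/(eigen_iff _ _ A B v HB); by exists a.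
have Eig : forall a, common_zero_subspace A B (eigenspace A a).
  move=> a; apply/(cz_iff _ _ A B _ HB) => u /eigenspaceP Hu; by exists a.
move=> W; split.
  move=> [W0 [Hcz Hmax]].
  have [a [Ha HWa]] := single_eig _ _ _ _ W0 (proj1 (cz_iff _ _ A B W HB) Hcz).
  have HaW := Hmax _ (Eig a) HWa.
  have EQ : (W == eigenspace A a)%MS by rewrite HWa HaW.
  exists a; split => //; split => //; by apply/eqP; rewrite eqn_leq !mxrankS.
move=> [a [Ha [HWa _]]].
move/andP: HWa => [sWE sEW].
have [v Hv v0] := eigenvalueP Ha.
have vW : (v <= W)%MS.
  by apply: submx_trans sEW; apply/eigenspaceP.
have W0 : W != 0.
  by apply: contraNneq v0 => W0; move: vW; rewrite W0 submx0.
split => //; split.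
  apply/(cz_iff _ _ A B _ HB) => u uW; exists a; apply/eigenspaceP.
  exact: submx_trans sWE.
move=> W' Hcz' sWW'.
have W'0 : W' != 0.
  by apply: contraNneq W0 => W'0; move: sWW'; rewrite W'0 submx0.
have [b [Hb HW'b]] := single_eig _ _ _ _ W'0 (proj1 (cz_iff _ _ A B W' HB) Hcz').
have vb : v *m A = b *: v.
  by apply/eigenspaceP; apply: submx_trans HW'b; apply: submx_trans sWW'.
have ab : a = b.
  move: Hv; rewrite vb => /eqP; rewrite -subr_eq0 -scalerBl scaler_eq0 (negbTE v0) orbF.
  by rewrite subr_eq0 => /eqP.
apply: submx_trans sEW; by rewrite ab.
Qed.
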